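(* Let $(R,\mathfrak{m},k)$ be a commutative Noetherian local ring, let $x,y\in R$ and let $n\ge0$ be an integer. For an $R$-module $M$ the following are equivalent: (1) there is an exact sequence of $R$-modules $0 \to (R/(x))^n \to M \to R/(y) \to 0$; (2) there is an exact sequence of $R$-modules $R^{n+1} \xrightarrow{T(x,y,a_1,\dots,a_n)} R^{n+1} \to M \to 0$ for some elements $a_1,\dots,a_n\in((x):(0:y))$.
   Context: For $x,y,a_1,\dots,a_n\in R$, $T(x,y,a_1,\dots,a_n)$ denotes the $(n+1)\times(n+1)$ matrix whose upper-left $n\times n$ block is $x$ times the identity matrix, whose last column is $(a_1,\dots,a_n,y)^{T}$, and all of whose other entries are $0$; for $n=0$ it is the $1\times1$ matrix $(y)$. Here $((x):(0:y))=\{r\in R : r\,(0:y)\subseteq (x)\}$, where $(0:y)=\{r\in R: ry=0\}$. *)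

(* Defs.v *)
From HB Require Import structures.
From mathcomp Require Import all_boot all_algebra.
From mathcomp Require Import boolp.
Set Implicit Arguments. Unset Strict Implicit. Unset Printing Implicit Defensive.
Import GRing.Theory.
Local Open Scope ring_scope.
Local Open Scope quotient_scope.

Definition is_ideal (R : comNzRingType) (I : R -> Prop) : Prop :=
  [/\ I 0, (forall a b, I a -> I b -> I (a + b)) & (forall r a, I a -> I (r * a))].

Definition noetherian_ring (R : comNzRingType) : Prop :=
  forall I : nat -> R -> Prop,
    (forall k, is_ideal (I k)) ->
    (forall k r, I k r -> I k.+1 r) ->
    exists N, forall k, (N <= k)%N -> forall r, I k r -> I N r.

Definition maximal_ideal (R : comNzRingType) (m : R -> Prop) : Prop :=
  [/\ is_ideal m, ~ m 1 &
      forall J : R -> Prop, is_ideal J -> (forall r, m r -> J r) ->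
        (forall r, J r <-> m r) \/ J 1].

Definition local_ring (R : comNzRingType) : Prop :=
  exists m : R -> Prop, maximal_ideal m /\
    forall m' : R -> Prop, maximal_ideal m' -> forall r, m' r <-> m r.

Definition ann0 (R : comNzRingType) (y : R) : R -> Prop := fun s => s * y = 0.

Definition colon_ann (R : comNzRingType) (x y : R) : R -> Prop :=
  fun r => forall s, ann0 y s -> exists c, r * s = c * x.

Definition pideal (R : comNzRingType) (r : R) : {pred R} :=
  fun a => `[< exists c : R, a = c * r >].

Fact pideal_zmod_closed (R : comNzRingType) (r : R) : zmod_closed (pideal r).
Proof.
split.
  by apply/asboolP; exists 0; rewrite mul0r.
move=> a b /asboolP [c ->] /asboolP [d ->]; apply/asboolP.
by exists (c - d); rewrite mulrBl.
Qed.

HB.instance Definition _ (R : comNzRingType) (r : R) :=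
  GRing.isZmodClosed.Build R (pideal r) (pideal_zmod_closed r).

Section CyclicQuot.
Variables (R : comNzRingType) (r : R).

Definition cycq := Quotient.quot (pideal r).
HB.instance Definition _ := GRing.Zmodule.on cycq.
HB.instance Definition _ := EqQuotient.on cycq.

Definition cycq_scale (a : R) (q : cycq) : cycq := \pi_cycq (a * repr q).

Lemma cycq_scale_pi a b : cycq_scale a (\pi_cycq b) = \pi_cycq (a * b).
Proof.
rewrite /cycq_scale; apply/eqP; rewrite piE /Quotient.equiv.
have : (repr (\pi_cycq b : cycq) == b %[mod cycq]) by rewrite reprK.
rewrite piE /Quotient.equiv => /asboolP [c hc]; apply/asboolP.
by exists (a * c); rewrite -mulrBr hc mulrA.
Qed.

Lemma cycq_scalerA a b v : cycq_scale a (cycq_scale b v) = cycq_scale (a * b) v.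
Proof. by elim/quotW: v => v; rewrite (cycq_scale_pi b) !cycq_scale_pi mulrA. Qed.

Lemma cycq_scale1r : left_id 1 cycq_scale.
Proof. by move=> v; elim/quotW: v => v; rewrite cycq_scale_pi mul1r. Qed.

Lemma cycq_scalerDr : right_distributive cycq_scale +%R.
Proof.
move=> a u v; elim/quotW: u => u; elim/quotW: v => v.
by rewrite -pi_addr (cycq_scale_pi a (u + v)) (cycq_scale_pi a u) (cycq_scale_pi a v) mulrDr pi_addr.
Qed.

Lemma cycq_scalerDl v : {morph cycq_scale^~ v : a b / a + b}.
Proof.
move=> a b; elim/quotW: v => v.
rewrite (cycq_scale_pi (a + b)) (cycq_scale_pi a) (cycq_scale_pi b) mulrDl.
by rewrite -pi_addr.
Qed.

HB.instance Definition _ := GRing.Zmodule_isLmodule.Build R cycq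
  cycq_scalerA cycq_scale1r cycq_scalerDr cycq_scalerDl.

End CyclicQuot.

(* cycq r : lmodType R  is the cyclic R-module R/(r). *)

(* upper-left n x n block x * identity, last column (a_1,...,a_n,y)^T, zeros elsewhere *)
Definition Tmx (R : comNzRingType) (n : nat) (x y : R) (a : 'I_n -> R) : 'M[R]_(n.+1) :=
  \matrix_(i, j)
    if j == ord_max then
      (if unlift ord_max i is Some i' then a i' else y)
    else (if i == j then x else 0).

(* Main.v *)
Require Import Defs.
From HB Require Import structures.
From mathcomp Require Import all_boot all_algebra boolp.
Set Implicit Arguments. Unset Strict Implicit. Unset Printing Implicit Defensive.
Import GRing.Theory.
Local Open Scope ring_scope.
Local Open Scope quotient_scope.

Lemma cycq_pi0 (R : comNzRingType) (r a : R) :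
  (\pi_(cycq r) a = 0) <-> exists c, a = c * r.
Proof.
have -> : (0 : cycq r) = \pi_(cycq r) 0 by rewrite pi_zeror.
split.
  move/eqP; rewrite -Quotient.idealrBE subr0 => /asboolP //.
move=> h; apply/eqP; rewrite -Quotient.idealrBE subr0; exact/asboolP.
Qed.

Lemma cycq_scaleE (R : comNzRingType) (r a b : R) :
  a *: (\pi_(cycq r) b) = \pi_(cycq r) (a * b).
Proof. exact: cycq_scale_pi. Qed.

Lemma cycq_piD (R : comNzRingType) (r a b : R) :
  \pi_(cycq r) (a + b) = \pi_(cycq r) a + \pi_(cycq r) b.
Proof. by rewrite pi_addr. Qed.

Lemma cycq_piB (R : comNzRingType) (r a b : R) :
  \pi_(cycq r) (a - b) = \pi_(cycq r) a - \pi_(cycq r) b.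
Proof. by rewrite pi_addr pi_oppr. Qed.

Lemma cycq_reprK (R : comNzRingType) (r : R) (q : cycq r) :
  \pi_(cycq r) (repr q) = q.
Proof. exact: reprK. Qed.

Lemma cycq_eqE (R : comNzRingType) (r a b : R) :
  \pi_(cycq r) a = \pi_(cycq r) b -> exists c, a = b + c * r.
Proof.
move=> h; have : \pi_(cycq r) (a - b) = 0 by rewrite cycq_piB h subrr.
by case/cycq_pi0 => c hc; exists c; rewrite -hc addrC subrK.
Qed.

Lemma sum_if_eq (V : nmodType) (n : nat) (F : 'I_n -> V) i0 :
  \sum_i (if i == i0 then F i else 0) = F i0.
Proof. by rewrite -big_mkcond big_pred1_eq. Qed.

Definition mkv (R : comNzRingType) (n : nat) (c : 'I_n -> R) (d : R) : 'cV[R]_(n.+1) :=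
  \col_j (if unlift ord_max j is Some i then c i else d).

Lemma mkv_lift (R : comNzRingType) n (c : 'I_n -> R) d i :
  mkv c d (lift ord_max i) 0 = c i.
Proof. by rewrite mxE liftK. Qed.

Lemma mkv_max (R : comNzRingType) n (c : 'I_n -> R) d :
  mkv c d ord_max 0 = d.
Proof. by rewrite mxE unlift_none. Qed.

Lemma mkv_eta (R : comNzRingType) n (v : 'cV[R]_(n.+1)) :
  v = mkv (fun i => v (lift ord_max i) 0) (v ord_max 0).
Proof.
apply/matrixP=> j k; rewrite ord1 mxE.
by case: unliftP => [i ->|->].
Qed.

Lemma mkv_inj (R : comNzRingType) n (c c' : 'I_n -> R) d d' :
  mkv c d = mkv c' d' -> c =1 c' /\ d = d'.
Proof.
move=> h; split; last by rewrite -(mkv_max c d) h mkv_max.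
by move=> i; rewrite -(mkv_lift c d) h mkv_lift.
Qed.

Lemma lift_max_neq n (i : 'I_n) : (lift ord_max i == ord_max :> 'I_n.+1) = false.
Proof. by apply/negbTE; rewrite eq_sym neq_lift. Qed.

Lemma unlift_lift_max n (i : 'I_n) : unlift ord_max (lift ord_max i) = Some i.
Proof. exact: liftK. Qed.

Lemma Tmx_mkv (R : comNzRingType) n (x y : R) (a : 'I_n -> R) c d :
  Tmx x y a *m mkv c d = mkv (fun i => x * c i + a i * d) (y * d).
Proof.
apply/matrixP=> j k; rewrite ord1 !mxE (bigD1 ord_max) //= !mxE eqxx unlift_none.
case: unliftP => [i ->|->].
  rewrite (bigD1 (lift ord_max i)) /=; last by rewrite lift_max_neq.
  rewrite !mxE eqxx lift_max_neq big1 ?addr0; first by rewrite unlift_lift_max addrC.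
  move=> l /andP [hl1 hl2]; rewrite !mxE (negbTE hl1) eq_sym (negbTE hl2).
  by rewrite mul0r.
rewrite big1 ?addr0 // => l hl; rewrite !mxE (negbTE hl) eq_sym (negbTE hl).
by rewrite mul0r.
Qed.

Definition dl (R : comNzRingType) n (i : 'I_n) : 'I_n -> R :=
  fun k => if k == i then 1 else 0.

Lemma mkv_decomp (R : comNzRingType) n (c : 'I_n -> R) d :
  mkv c d = \sum_i c i *: mkv (dl R i) 0 + d *: mkv (fun=> 0) 1.
Proof.
apply/matrixP=> j k; rewrite ord1 !mxE.
case: unliftP => [i0 ->|->].
  rewrite mulr0 addr0 summxE.
  under eq_bigr => i _ do rewrite !mxE unlift_lift_max /dl (fun_if (fun z => c i * z)) mulr1 mulr0.
  by rewrite (eq_bigr (fun i => if i == i0 then c i else 0)) ?sum_if_eq // => i _; rewrite eq_sym.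
rewrite mulr1 summxE big1 ?add0r // => i _.
by rewrite !mxE unlift_none mulr0.
Qed.

Section Dir21.
Variables (R : comNzRingType) (x y : R) (n : nat) (M : lmodType R) (a : 'I_n -> R).
Variable p : {linear 'cV[R]_(n.+1) -> M}.
Hypothesis ha : forall i, colon_ann x y (a i).
Hypothesis psurj : forall m, exists v, p v = m.
Hypothesis pker : forall v, p v = 0 <-> exists w, Tmx x y a *m w = v.

Definition PE i := p (mkv (dl R i) 0).
Definition Pl := p (mkv (fun=> 0) 1).

Lemma p_mkv c d : p (mkv c d) = \sum_i c i *: PE i + d *: Pl.
Proof.
rewrite {1}mkv_decomp linearD linear_sum /= linearZ; congr (_ + _).
by under eq_bigr do rewrite linearZ.
Qed.

Lemma p_T c d : p (mkv (fun i => x * c i + a i * d) (y * d)) = 0.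
Proof. by apply/pker; exists (mkv c d); rewrite Tmx_mkv. Qed.

Lemma xPE i : x *: PE i = 0.
Proof.
rewrite -[RHS](p_T (dl R i) 0) p_mkv mulr0 scale0r addr0.
rewrite (eq_bigr (fun k => if k == i then x *: PE k else 0)) ?sum_if_eq //.
move=> k _; rewrite mulr0 addr0 /dl; case: (k == i); first by rewrite mulr1.
by rewrite mulr0 scale0r.
Qed.

Lemma yPl : y *: Pl = - \sum_i a i *: PE i.
Proof.
apply/eqP; rewrite -addr_eq0 addrC; apply/eqP.
rewrite -[RHS](p_T (fun=> 0) 1) p_mkv mulr1.
by congr (_ + _); apply: eq_bigr => i _; rewrite mulr0 add0r mulr1.
Qed.

Lemma modx_PE b b' i : \pi_(cycq x) b = \pi_(cycq x) b' -> b *: PE i = b' *: PE i.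
Proof.
case/cycq_eqE => c ->; by rewrite scalerDl -scalerA xPE scaler0 addr0.
Qed.

Definition fmap (u : {ffun 'I_n -> cycq x}) : M := \sum_i repr (u i) *: PE i.

Lemma fmap_lin0 r (u u' : {ffun 'I_n -> cycq x}) : fmap (r *: u + u') = r *: fmap u + fmap u'.
Proof.
rewrite /fmap scaler_sumr -big_split; apply: eq_bigr => i _ /=.
rewrite !ffunE scalerA -scalerDl; apply: modx_PE.
by rewrite cycq_piD -cycq_scaleE !cycq_reprK.
Qed.

Lemma fmap_lin : linear fmap.
Proof. exact: fmap_lin0. Qed.

Lemma fmap_mkv u : fmap u = p (mkv (fun i => repr (u i)) 0).
Proof. by rewrite p_mkv scale0r addr0. Qed.

Lemma psurjb m : exists v, p v == m.
Proof. by case: (psurj m) => v hv; exists v; apply/eqP. Qed.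

Definition pick m := xchoose (psurjb m).
Lemma pickP m : p (pick m) = m.
Proof. exact/eqP/(xchooseP (psurjb m)). Qed.

Definition gmap m : cycq y := \pi_(cycq y) (pick m ord_max 0).

Lemma g_p v : gmap (p v) = \pi_(cycq y) (v ord_max 0).
Proof.
have : p (pick (p v) - v) = 0 by rewrite linearB pickP subrr.
case/pker => w hw.
have := congr1 (fun z : 'cV_(n.+1) => z ord_max 0) hw.
rewrite /= {1}(mkv_eta w) Tmx_mkv mkv_max !mxE => e.
rewrite /gmap; have -> : pick (p v) ord_max 0 = v ord_max 0 + w ord_max 0 * y.
  by rewrite mulrC e addrCA subrr addr0.
rewrite cycq_piD.
have -> : \pi_(cycq y) (w ord_max 0 * y) = 0 by apply/cycq_pi0; exists (w ord_max 0).
by rewrite addr0.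
Qed.

Lemma gmap_lin : linear gmap.
Proof.
move=> r m m'; case: (psurj m) => v <-; case: (psurj m') => v' <-.
by rewrite -linearP !g_p !mxE cycq_piD cycq_scaleE.
Qed.

Lemma gf u : gmap (fmap u) = 0.
Proof. by rewrite fmap_mkv g_p mkv_max; apply/cycq_pi0; exists 0; rewrite mul0r. Qed.

Lemma fmap_inj0 u : fmap u = 0 -> u = 0.
Proof.
rewrite fmap_mkv => /pker [w]; rewrite (mkv_eta w) Tmx_mkv => /mkv_inj [hc hd].
apply/ffunP => i; rewrite ffunE -[u i]cycq_reprK -hc.
have h0 : ann0 y (w ord_max 0) by rewrite /ann0 mulrC.
have [c hcx] := ha i h0.
by apply/cycq_pi0; exists (w (lift ord_max i) 0 + c); rewrite hcx mulrDl mulrC.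
Qed.

Lemma dir21 : exists (f : {linear {ffun 'I_n -> cycq x} -> M}) (g : {linear M -> cycq y}),
      [/\ injective f,
          (forall c : cycq y, exists m : M, g m = c) &
          (forall m : M, g m = 0 <-> exists u, f u = m)].
Proof.
exists (HB.pack_for {linear {ffun 'I_n -> cycq x} -> M} fmap
          (GRing.isLinear.Build R _ M *:%R fmap fmap_lin)).
exists (HB.pack_for {linear M -> cycq y} gmap
          (GRing.isLinear.Build R M _ *:%R gmap gmap_lin)).
split => /=.
- move=> u u' h.
  have : fmap ((-1) *: u' + u) = 0 by rewrite fmap_lin0 h scaleN1r addNr.
  by move/fmap_inj0; rewrite scaleN1r addrC => /eqP; rewrite subr_eq0 => /eqP.
- move=> c; exists (p (mkv (fun=> 0) (repr c))); by rewrite g_p mkv_max cycq_reprK.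
- move=> m; split; last by case=> u <-; exact: gf.
  case: (psurj m) => v <-; rewrite g_p => /cycq_pi0 [d hd].
  exists [ffun i => \pi_(cycq x) (v (lift ord_max i) 0 - d * a i)].
  rewrite {2}(mkv_eta v) p_mkv hd -scalerA yPl /fmap.
  rewrite scalerN scaler_sumr -sumrN -big_split; apply: eq_bigr => i _ /=.
  rewrite (@modx_PE _ (v (lift ord_max i) 0 - d * a i)); last by rewrite ffunE cycq_reprK.
  by rewrite scalerBl scalerA.
Qed.
End Dir21.

Section Dir12.
Variables (R : comNzRingType) (x y : R) (n : nat) (M : lmodType R).
Variables (f : {linear {ffun 'I_n -> cycq x} -> M}) (g : {linear M -> cycq y}).
Hypothesis finj : injective f.
Hypothesis gex : forall m : M, g m = 0 <-> exists u, f u = m.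
Variables (m0 : M) (u0 : {ffun 'I_n -> cycq x}).
Hypothesis gm0 : g m0 = \pi_(cycq y) 1.
Hypothesis hu0 : f u0 = y *: m0.

Definition ee (i : 'I_n) : {ffun 'I_n -> cycq x} :=
  [ffun k => if k == i then \pi_(cycq x) 1 else 0].
Definition FE i := f (ee i).

Lemma u_decomp (u : {ffun 'I_n -> cycq x}) : u = \sum_i repr (u i) *: ee i.
Proof.
apply/ffunP => k; rewrite sum_ffunE.
rewrite (eq_bigr (fun i => if i == k then repr (u i) *: \pi_(cycq x) 1 else 0)).
  by rewrite sum_if_eq cycq_scaleE mulr1 cycq_reprK.
move=> i _; rewrite !ffunE eq_sym; case: (i == k) => //; by rewrite scaler0.
Qed.

Lemma f_decomp u : f u = \sum_i repr (u i) *: FE i.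
Proof.
rewrite {1}(u_decomp u) linear_sum; apply: eq_bigr => i _; by rewrite linearZ.
Qed.

Lemma xFE i : x *: FE i = 0.
Proof.
rewrite /FE -linearZ; have -> : x *: ee i = 0; last by rewrite linear0.
apply/ffunP => k; rewrite !ffunE; case: (k == i); last by rewrite scaler0.
by rewrite cycq_scaleE mulr1; apply/cycq_pi0; exists 1; rewrite mul1r.
Qed.

Lemma modx_FE b b' i : \pi_(cycq x) b = \pi_(cycq x) b' -> b *: FE i = b' *: FE i.
Proof.
case/cycq_eqE => c ->; by rewrite scalerDl -scalerA xFE scaler0 addr0.
Qed.

Definition aa i := - repr (u0 i).

Definition pmap (v : 'cV[R]_(n.+1)) : M :=
  \sum_i v (lift ord_max i) 0 *: FE i + v ord_max 0 *: m0.

Lemma pmap_lin0 r (v v' : 'cV[R]_(n.+1)) : pmap (r *: v + v') = r *: pmap v + pmap v'.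
Proof.
rewrite /pmap scalerDr scaler_sumr addrACA -big_split; congr (_ + _).
  by apply: eq_bigr => i _; rewrite !mxE scalerDl scalerA.
by rewrite !mxE scalerDl scalerA.
Qed.

Lemma pmap_lin : linear pmap.
Proof. exact: pmap_lin0. Qed.

Lemma pmap_mkv c d : pmap (mkv c d) = \sum_i c i *: FE i + d *: m0.
Proof.
rewrite /pmap mkv_max; congr (_ + _); apply: eq_bigr => i _; by rewrite mkv_lift.
Qed.

Lemma gFE i : g (FE i) = 0.
Proof. by apply/gex; exists (ee i). Qed.

Lemma g_pmap v : g (pmap v) = \pi_(cycq y) (v ord_max 0).
Proof.
rewrite /pmap linearD linear_sum big1 ?add0r.
  by rewrite linearZ_LR gm0 cycq_scaleE mulr1.
by move=> i _; rewrite linearZ_LR gFE scaler0.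
Qed.

Lemma colon_aa i : colon_ann x y (aa i).
Proof.
move=> s hs.
have : f (s *: u0) = f 0 by rewrite linearZ_LR hu0 scalerA hs scale0r linear0.
move/finj/(congr1 (fun u : {ffun 'I_n -> cycq x} => u i)); rewrite !ffunE.
rewrite -[u0 i]cycq_reprK cycq_scaleE => /cycq_pi0 [c hc].
by exists (- c); rewrite /aa mulNr mulrC hc mulNr.
Qed.

Lemma aa_sum : \sum_i aa i *: FE i + y *: m0 = 0.
Proof.
rewrite -hu0 (f_decomp u0) -big_split big1 // => i _.
by rewrite /aa scaleNr /= addNr.
Qed.

Lemma pmap_surj m : exists v, pmap v = m.
Proof.
set r := repr (g m).
have : g (m - r *: m0) = 0.
  by rewrite linearB linearZ_LR gm0 cycq_scaleE mulr1 /r cycq_reprK subrr.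
case/gex => u hu.
exists (mkv (fun i => repr (u i)) r); rewrite pmap_mkv -f_decomp hu.
by rewrite subrK.
Qed.

Lemma pmap_ker v : pmap v = 0 <-> exists w, Tmx x y aa *m w = v.
Proof.
split; last first.
  case=> w <-; rewrite (mkv_eta w) Tmx_mkv pmap_mkv.
  set c := fun i => w (lift ord_max i) 0; set d := w ord_max 0.
  rewrite (eq_bigr (fun i => d *: (aa i *: FE i))); last first.
    by move=> i _; rewrite scalerDl [x * _]mulrC -[(_ * x) *: _]scalerA xFE scaler0 add0r scalerA mulrC.
  by rewrite -scaler_sumr mulrC -scalerA -scalerDr aa_sum scaler0.
move=> hp.
have : g (pmap v) = 0 by rewrite hp linear0.
rewrite g_pmap => /cycq_pi0 [d hd].
pose u' : {ffun 'I_n -> cycq x} :=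
  [ffun i => \pi_(cycq x) (v (lift ord_max i) 0 - d * aa i)].
have hfu : f u' = 0.
  transitivity (pmap v); last exact: hp.
  rewrite f_decomp /pmap hd -scalerA.
  rewrite -hu0 f_decomp scaler_sumr -big_split; apply: eq_bigr => i _ /=.
  rewrite (@modx_FE _ (v (lift ord_max i) 0 - d * aa i)); last by rewrite ffunE cycq_reprK.
  by rewrite scalerA -scalerDl /aa mulrN opprK.
have hu'0 : u' = 0 by apply: finj; rewrite hfu linear0.
have : forall i, exists c, v (lift ord_max i) 0 - d * aa i = c * x.
  move=> i; apply/cycq_pi0.
  by rewrite -(ffunE (fun i => \pi_(cycq x) (v (lift ord_max i) 0 - d * aa i))) -/u' hu'0 ffunE.
case/fin_all_exists => c hc.
exists (mkv c d); rewrite Tmx_mkv [RHS]mkv_eta hd mulrC; congr mkv.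
by apply: funext => i; rewrite mulrC -hc [aa i * d]mulrC subrK.
Qed.

End Dir12.

Theorem lemma3p3 (R : comNzRingType) (x y : R) (n : nat) (M : lmodType R) :
  noetherian_ring R -> local_ring R ->
  ((* (1): 0 -> (R/(x))^n --f--> M --g--> R/(y) -> 0 exact *)
   (exists (f : {linear {ffun 'I_n -> cycq x} -> M}) (g : {linear M -> cycq y}),
      [/\ injective f,
          (forall c : cycq y, exists m : M, g m = c) &
          (forall m : M, g m = 0 <-> exists u, f u = m)])
  <->
   (* (2): R^{n+1} --T(x,y,a)--> R^{n+1} --p--> M -> 0 exact, a_i in ((x):(0:y)) *)
   (exists a : 'I_n -> R,
      (forall i, colon_ann x y (a i)) /\
      exists p : {linear 'cV[R]_(n.+1) -> M},
        (forall m : M, exists v, p v = m) /\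
        (forall v : 'cV[R]_(n.+1), p v = 0 <-> exists w, Tmx x y a *m w = v))).
Proof.
move=> _ _; split.
- case=> f [g [finj gsurj gex]].
  have [m0 gm0] := gsurj (\pi_(cycq y) 1).
  have : g (y *: m0) = 0.
    rewrite linearZ_LR gm0 cycq_scaleE mulr1; apply/cycq_pi0; exists 1; by rewrite mul1r.
  case/gex => u0 hu0.
  exists (aa u0); split; first by move=> i; exact: (colon_aa finj hu0).
  exists (HB.pack_for {linear 'cV[R]_(n.+1) -> M} (pmap f m0)
            (GRing.isLinear.Build R _ M *:%R (pmap f m0) (pmap_lin f m0))).
  split => /=.
  + exact: (pmap_surj gex gm0).
  + exact: (pmap_ker finj gex gm0 hu0).
- by case=> a [ha [p [psurj pker]]]; exact: (dir21 ha psurj pker).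
Qed.
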